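(* Let $n\ge0$ and $\boldsymbol\mu\in\mathcal{P}(\Phi)$, and suppose $k=\|\boldsymbol\mu\|+\ell(\boldsymbol\mu^e)\le n$. Then the centralizer $\mathcal A_{\boldsymbol\mu^{\uparrow n}}$ of $J_{\boldsymbol\mu^{\uparrow n}}$ in $G_n$ is $$\mathcal A_{\boldsymbol\mu^{\uparrow n}}=\left\{\begin{bmatrix}A&B\\C&D\end{bmatrix}\ \middle|\ A\in\mathcal A_{\boldsymbol\mu^{\uparrow k}},\ D\in G_{n-k},\ J_{\boldsymbol\mu^{\uparrow k}}B=B,\ CJ_{\boldsymbol\mu^{\uparrow k}}=C\right\},$$ where the block decomposition is of size $(k\,|\,n-k)$ and $\mathcal A_{\boldsymbol\mu^{\uparrow k}}$ is the centralizer of $J_{\boldsymbol\mu^{\uparrow k}}$ in $G_k$.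
   Context: $q$ is a prime power, $G_n=GL_n(\mathbb F_q)$. $\Phi$ is the set of monic irreducible polynomials in $\mathbb F_q[t]$ other than $t$, $d(f)$ the degree of $f$; $\mathcal{P}(\Phi)$ is the set of finitely supported maps $\boldsymbol\lambda$ from $\Phi$ to partitions, $\|\boldsymbol\lambda\|=\sum_f d(f)|\boldsymbol\lambda(f)|$, $\boldsymbol\lambda^e=\boldsymbol\lambda(t-1)$, $\ell$ = number of nonzero parts. For $f=t^d-\sum_{i=1}^d a_it^{i-1}\in\Phi$, $J(f)$ is the $d\times d$ companion matrix with $1$'s on the superdiagonal, last row $(a_1,\dots,a_d)$ and zeros elsewhere; $J_m(f)$ is the $dm\times dm$ block upper triangular matrix with $m$ diagonal blocks $J(f)$, blocks $I_d$ on the block superdiagonal, and zeros elsewhere. For $\boldsymbol\lambda\in\mathcal{P}(\Phi)$, $J_{\boldsymbol\lambda}$ is the block diagonal matrix with blocks $J_{\boldsymbol\lambda_i(f)}(f)$ over all $f$ and $i$, arranged with the blocks for $f\ne t-1$ first and then the blocks for $f=t-1$ in nonincreasing order of part size. For $\boldsymbol\mu\in\mathcal{P}(\Phi)$ with $r=\ell(\boldsymbol\mu^e)$ and $n\ge\|\boldsymbol\mu\|+r$, define $\boldsymbol\mu^{\uparrow n}\in\mathcal{P}(\Phi)$ by $\boldsymbol\mu^{\uparrow n}(f)=\boldsymbol\mu(f)$ for $f\ne t-1$ and $\boldsymbol\mu^{\uparrow n}(t-1)=(\boldsymbol\mu^e_1+1,\dots,\boldsymbol\mu^e_r+1,1,\dots,1)$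 with $n-r-\|\boldsymbol\mu\|$ trailing ones; then $J_{\boldsymbol\mu^{\uparrow n}}\in G_n$. *)

(* Defs.v *)
From HB Require Import structures.
From mathcomp Require Import all_boot all_order all_algebra all_field.
Set Implicit Arguments. Unset Strict Implicit. Unset Printing Implicit Defensive.
Import GRing.Theory.
Local Open Scope ring_scope.

Section Defs.
Variable F : finFieldType.

(* An element of P(Phi): a finite list of pairs (f, lambda(f)) with distinct keys;
   f not in the list means lambda(f) is the empty partition. *)
Definition PPhi := seq ({poly F} * seq nat).

Definition is_partition (s : seq nat) : bool :=
  sorted geq s && all (fun x => 0 < x)%N s.

Definition inPhi (f : {poly F}) : Prop :=
  f \is monic /\ irreducible_poly f /\ f != 'X.

Definition PPhi_valid (mu : PPhi) : Prop :=
  uniq (unzip1 mu) /\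
  forall p, p \in mu -> inPhi p.1 /\ is_partition p.2.

Definition tm1 : {poly F} := 'X - 1.

Definition PPhi_at (mu : PPhi) (f : {poly F}) : seq nat :=
  head [::] [seq p.2 | p <- mu & p.1 == f].

Definition PPhi_e (mu : PPhi) : seq nat := PPhi_at mu tm1.

Definition PPhi_norm (mu : PPhi) : nat :=
  (\sum_(p <- mu) (size p.1).-1 * sumn p.2)%N.

Definition PPhi_up (n : nat) (mu : PPhi) : PPhi :=
  (tm1, map S (PPhi_e mu) ++ nseq (n - size (PPhi_e mu) - PPhi_norm mu) 1%N)
  :: [seq p <- mu | p.1 != tm1].

(* a square block: its size and its entries indexed by naturals *)
Definition block := (nat * (nat -> nat -> F))%type.

(* companion matrix J(f), with f = t^d - sum a_i t^(i-1), so a_(j+1) = - f_j *)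
Definition compJ (f : {poly F}) (i j : nat) : F :=
  let d := (size f).-1 in
  (if i == d.-1 then - f`_j else 0) + (if j == i.+1 then 1 else 0).

Definition Jm (f : {poly F}) (m : nat) : block :=
  let d := (size f).-1 in
  ((d * m)%N, fun i j =>
     let bi := (i %/ d)%N in let bj := (j %/ d)%N in
     if bi == bj then compJ f (i %% d) (j %% d)
     else if bj == bi.+1 then (if (i %% d == j %% d)%N then 1 else 0)
     else 0).

Fixpoint bdiag (bs : seq block) (i j : nat) : F :=
  match bs with
  | [::] => 0
  | (s, B) :: bs' =>
      if (i < s)%N && (j < s)%N then B i j
      else if (s <= i)%N && (s <= j)%N then bdiag bs' (i - s) (j - s)
      else 0
  end.

(* the blocks of J_lambda: first f <> t-1 (in list order), then the blocks for
   t-1 in nonincreasing order of part size (the partition is nonincreasing) *)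
Definition Jblocks (lam : PPhi) : seq block :=
  flatten [seq [seq Jm p.1 m | m <- p.2] | p <- lam & p.1 != tm1]
  ++ [seq Jm tm1 m | m <- PPhi_e lam].

Definition Jmat (n : nat) (lam : PPhi) : 'M[F]_n :=
  \matrix_(i < n, j < n) bdiag (Jblocks lam) i j.

Definition centralizerGL (n : nat) (J : 'M[F]_n) : pred 'M[F]_n :=
  [pred X | (X \in unitmx) && (X *m J == J *m X)].

End Defs.

(* Main.v *)
Require Import Defs.
From HB Require Import structures.
From mathcomp Require Import all_boot all_order all_algebra all_field.
From mathcomp Require Import zify.
Set Implicit Arguments. Unset Strict Implicit. Unset Printing Implicit Defensive.
Import GRing.Theory.
Local Open Scope ring_scope.
Section Aux.
Variable F : finFieldType.

Lemma sum_pick (m t : nat) (g : nat -> F) :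
  \sum_(0 <= c < m) (if c == t then g c else 0) = if (t < m)%N then g t else 0.
Proof.
elim: m => [|m IH]; first by rewrite big_geq.
rewrite big_nat_recr //= IH.
case: (ltngtP t m) => h.
- by rewrite ltnS (ltnW h) addr0.
- by rewrite ltnS leqNgt h addr0.
- by rewrite h ltnSn add0r.
Qed.

Lemma sum_shift (s t : nat) (g : nat -> F) :
  \sum_(s <= c < s + t) g c = \sum_(0 <= c < t) g (c + s)%N.
Proof. by rewrite -{1}[s]add0n big_addn addKn. Qed.

Definition goodb (b : block F) : Prop :=
  forall w u : nat -> F,
  (forall i, (i < b.1)%N -> \sum_(0 <= c < b.1) b.2 i c * w c = w i) ->
  (forall j, (j < b.1)%N -> \sum_(0 <= c < b.1) u c * b.2 c j = u j) ->
  \sum_(0 <= a < b.1) u a * w a = 0.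

Fixpoint allgood (bs : seq (block F)) : Prop :=
  if bs is b :: bs' then goodb b /\ allgood bs' else True.

Lemma allgood_cat s1 s2 : allgood (s1 ++ s2) <-> allgood s1 /\ allgood s2.
Proof. elim: s1 => [|b s1 IH] /=; first by tauto. by rewrite IH; tauto. Qed.

Lemma bdiag_good (bs : seq (block F)) : allgood bs ->
  let S := sumn (map fst bs) in
  forall w u : nat -> F,
  (forall i, (i < S)%N -> \sum_(0 <= c < S) bdiag bs i c * w c = w i) ->
  (forall j, (j < S)%N -> \sum_(0 <= c < S) u c * bdiag bs c j = u j) ->
  \sum_(0 <= a < S) u a * w a = 0.
Proof.
elim: bs => [|[s B] bs IH] /=; first by move=> _ w u _ _; rewrite big_geq.
move=> [gB gbs] w u hw hu.
rewrite (big_cat_nat _ (leq_addr _ s)) //= (sum_shift s).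
have -> : \sum_(0 <= a < s) u a * w a = 0.
  apply: gB => [i hi|j hj].
  - rewrite -(hw i (ltn_addr _ hi)) (big_cat_nat _ (leq_addr _ s)) //= (sum_shift s).
    rewrite [X in _ = _ + X]big1 ?addr0; last first.
      by move=> c _; rewrite hi /= ltnNge leq_addl /= (leqNgt s i) hi mul0r.
    by apply: eq_big_nat => c /andP[_ hc]; rewrite hi hc.
  - rewrite -(hu j (ltn_addr _ hj)) (big_cat_nat _ (leq_addr _ s)) //= (sum_shift s).
    rewrite [X in _ = _ + X]big1 ?addr0; last first.
      by move=> c _; rewrite hj ltnNge leq_addl /= (leqNgt s j) hj /= mulr0.
    by apply: eq_big_nat => c /andP[_ hc]; rewrite hj hc.
rewrite add0r.
apply: (IH gbs (fun c => w (c + s)%N) (fun c => u (c + s)%N)) => [i hi|j hj].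
- rewrite -(hw (i + s)%N); last by rewrite addnC ltn_add2l.
  rewrite (big_cat_nat _ (leq_addr _ s)) //= (sum_shift s) [X in _ = X + _]big_nat_cond [X in _ = X + _]big1 ?add0r; last first.
    move=> c /andP[/andP[_ hc] _]; rewrite hc.
    have h1 : (i + s < s)%N = false by rewrite ltnNge leq_addl.
    have h2 : (s <= c)%N = false by rewrite leqNgt hc.
    by rewrite h1 h2 andbF mul0r.
  apply: eq_big_nat => c _.
  have h1 : (i + s < s)%N = false by rewrite ltnNge leq_addl.
  by rewrite h1 /= !leq_addl /= !addnK.
- rewrite -(hu (j + s)%N); last by rewrite addnC ltn_add2l.
  rewrite (big_cat_nat _ (leq_addr _ s)) //= (sum_shift s) [X in _ = X + _]big_nat_cond [X in _ = X + _]big1 ?add0r; last first.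
    move=> c /andP[/andP[_ hc] _]; rewrite hc.
    have h1 : (j + s < s)%N = false by rewrite ltnNge leq_addl.
    have h2 : (s <= c)%N = false by rewrite leqNgt hc.
    by rewrite h1 h2 /= mulr0.
  apply: eq_big_nat => c _.
  have h1 : (c + s < s)%N = false by rewrite ltnNge leq_addl.
  by rewrite h1 /= !leq_addl /= !addnK.
Qed.


Lemma size_tm1 : size (tm1 F) = 2%N.
Proof. by rewrite /tm1 -polyC1 size_XsubC. Qed.

Lemma tm1_entry m i j : (Jm (tm1 F) m).2 i j =
  if i == j then 1 else if j == i.+1 then 1 else 0.
Proof.
rewrite /Jm /= size_tm1 /= !divn1 !modn1 /compJ size_tm1 /=.
rewrite /tm1 coefB coefX coefC /=.
by rewrite sub0r opprK addr0.
Qed.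

Lemma tm1_size m : (Jm (tm1 F) m).1 = m.
Proof. by rewrite /Jm /= size_tm1 mul1n. Qed.

Lemma good_tm1 m : (1 < m)%N -> goodb (Jm (tm1 F) m).
Proof.
move=> hm w u; rewrite tm1_size => hw hu.
have hw1 : forall i, (i.+1 < m)%N -> w i.+1 = 0.
  move=> i hi; have := hw i (ltnW hi).
  rewrite (eq_bigr (fun c => (if c == i then w c else 0) + (if c == i.+1 then w c else 0))); last first.
    move=> c _; rewrite tm1_entry; case: (eqVneq c i) => [->|ne].
      by rewrite (ltn_eqF (ltnSn i)) mul1r addr0.
    by rewrite add0r; case: (c == i.+1); rewrite ?mul1r ?mul0r.
  rewrite big_split /= !sum_pick (ltnW hi) hi => h.
  by apply: (addrI (w i)); rewrite addr0.
have hu1 : forall j, (j.+1 < m)%N -> u j = 0.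
  move=> j hj; have := hu j.+1 hj.
  rewrite (eq_bigr (fun c => (if c == j.+1 then u c else 0) + (if c == j then u c else 0))); last first.
    move=> c _; rewrite tm1_entry; case: (eqVneq c j.+1) => [->|ne].
      by rewrite (gtn_eqF (ltnSn j)) mulr1 addr0.
    by rewrite add0r eqSS eq_sym; case: (c == j); rewrite ?mulr1 ?mulr0.
  rewrite big_split /= !sum_pick (ltnW hj) hj => h.
  by apply: (addrI (u j.+1)); rewrite addr0.
rewrite big_nat_cond big1 // => a /andP[/andP[_ ha] _].
case: a ha => [|a] ha; first by rewrite hu1 ?mul0r.
by rewrite hw1 ?mulr0.
Qed.


Lemma sum_block (d m q : nat) (g : nat -> F) : (0 < d)%N -> (q < m)%N ->
  \sum_(0 <= c < d * m) (if (c %/ d == q)%N then g c else 0) =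
  \sum_(0 <= r < d) g (q * d + r)%N.
Proof.
move=> d0 qm.
have h1 : (q * d + d <= d * m)%N by nia.
rewrite (big_cat_nat (n := (q * d)%N)) //=; last by nia.
rewrite [X in _ + X](big_cat_nat (n := (q * d + d)%N)) //= ?leq_addr //.
rewrite [X in X + _]big_nat_cond [X in X + _]big1 ?add0r; last first.
  move=> c /andP[/andP[_ hc] _].
  by rewrite ltn_eqF // ltn_divLR.
rewrite [X in _ + X]big_nat_cond [X in _ + X]big1 ?addr0; last first.
  move=> c /andP[/andP[hc _] _].
  by rewrite gtn_eqF // leq_divRL // mulSn addnC.
rewrite (sum_shift (q * d)); apply: eq_big_nat => c /andP[_ hc].
by rewrite addnC divnMDl // divn_small // addn0 eqxx.
Qed.

Lemma phi_one (f : {poly F}) : inPhi f -> f != tm1 F -> f.[1] != 0.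
Proof.
move=> [fmon [firr fX]] ftm; apply/negP => /eqP h.
have hr : root f 1 by rewrite /root h.
move: hr; rewrite -dvdp_XsubCl => hd.
have := firr.2 ('X - 1%:P) _ hd; rewrite size_XsubC => /(_ isT).
rewrite eqp_monic ?monicXsubC // => /eqP e.
by move: ftm; rewrite -e /tm1 polyC1 eqxx.
Qed.

Lemma good_other f m : inPhi f -> f != tm1 F -> goodb (Jm f m).
Proof.
move=> hf ftm; have f1 := phi_one hf ftm.
case: hf => [fmon [firr fX]].
have d0 : (0 < (size f).-1)%N by rewrite -ltnS prednK ?firr.1 // (ltn_trans _ firr.1).
move=> w u; rewrite /Jm /=; set d := (size f).-1 => hw hu.
suff wz : forall a, (a < d * m)%N -> w a = 0.
  by rewrite big_nat_cond big1 // => a /andP[/andP[_ ha] _]; rewrite wz ?mulr0.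
suff : forall t, (t <= m)%N -> forall a, ((m - t) * d <= a)%N -> (a < d * m)%N -> w a = 0.
  by move=> h a; apply: (h m) => //; rewrite subnn.
elim => [|t IH] ht a ha1 ha2.
  by rewrite subn0 in ha1; nia.
case: (leqP ((m - t) * d) a) => ha3; first by apply: IH => //; apply: ltnW.
set q := (m - t.+1)%N.
have qm : (q < m)%N by rewrite /q; lia.
have qS : (q.+1 = m - t)%N by rewrite /q; lia.
have hrow : forall r, (r < d)%N ->
    \sum_(0 <= r' < d) compJ f r r' * w (q * d + r')%N = w (q * d + r)%N.
  move=> r hr.
  have hi : (q * d + r < d * m)%N.
    apply: (leq_trans _ (_ : q * d + d <= d * m)%N); first by rewrite ltn_add2l.
    by nia.
  rewrite -(hw _ hi).
  have e1 : ((q * d + r) %/ d = q)%N by rewrite divnMDl // divn_small // addn0.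
  have e2 : ((q * d + r) %% d = r)%N by rewrite modnMDl modn_small.
  rewrite e1 e2.
  transitivity (\sum_(0 <= c < d * m)
     (if (c %/ d == q)%N then compJ f r (c %% d) * w c else 0)).
    rewrite sum_block //; apply: eq_big_nat => c /andP[_ hc].
    by rewrite modnMDl modn_small.
  apply: eq_big_nat => c /andP[_ hc].
  rewrite [q == _]eq_sym; case: (eqVneq (c %/ d)%N q) => [_|ne] //.
  case: (eqVneq (c %/ d)%N q.+1) => [e|ne2]; last by rewrite mul0r.
  rewrite IH ?mulr0 //; first exact: ltnW.
  by rewrite -qS -(leq_divRL _ _ d0) e.
have hstep : forall r, (r.+1 < d)%N -> w (q * d + r.+1)%N = w (q * d + r)%N.
  move=> r hr; rewrite -(hrow r (ltnW hr)).
  have rd : (r == d.-1) = false by apply/negbTE; rewrite neq_ltn; apply/orP; left; rewrite -ltnS prednK.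
  rewrite (eq_big_nat _ _ (F2 := fun r' => if r' == r.+1 then w (q * d + r')%N else 0)).
    by rewrite sum_pick hr.
  move=> r' _; rewrite /compJ -/d rd add0r.
  by case: (r' == r.+1); rewrite ?mul1r ?mul0r.
have hall : forall r, (r < d)%N -> w (q * d + r)%N = w (q * d)%N.
  elim => [|r IHr] hr; first by rewrite addn0.
  by rewrite hstep // IHr // ltnW.
have hd1 : (d.-1 < d)%N by rewrite prednK.
have hlast := hrow d.-1 hd1.
rewrite (hall _ hd1) in hlast.
have hz : w (q * d)%N = 0.
  move: hlast.
  rewrite (eq_big_nat _ _ (F2 := fun r' => - (f`_r' * w (q * d)%N))); last first.
    move=> r' /andP[_ hr']; rewrite /compJ -/d eqxx prednK // (ltn_eqF hr') addr0.
    by rewrite hall // mulNr.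
  rewrite sumrN -mulr_suml => /eqP; rewrite eq_sym -addr_eq0 -{1}[w _]mul1r -mulrDl.
  rewrite mulf_eq0 => /orP[|/eqP //].
  have sz : size f = d.+1 by rewrite prednK // (ltn_trans _ firr.1).
  have fd : f`_d = 1 by rewrite -(monicP fmon) lead_coefE sz.
  move=> h; exfalso; move/negP: f1; apply.
  rewrite horner_coef sz big_ord_recr /= fd expr1n mulr1.
  rewrite -(big_mkord xpredT (fun i => f`_i * 1 ^+ i)).
  rewrite (eq_big_nat _ _ (F2 := fun i => f`_i)); last by move=> i _; rewrite expr1n mulr1.
  by rewrite addrC.
have -> : a = (q * d + (a - q * d))%N.
  by rewrite subnKC // leqNgt; apply/negP => h; move: h ha3; rewrite -qS; nia.
rewrite hall ?hz //.
rewrite -qS in ha3; nia.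
Qed.

End Aux.

Section Aux2.
Variable F : finFieldType.
Local Notation tm := (tm1 F).

Lemma PPhi_at_cons (y : {poly F}) l (rest : PPhi F) x :
  PPhi_at ((y, l) :: rest) x = if y == x then l else PPhi_at rest x.
Proof. by rewrite /PPhi_at /=; case: (y == x). Qed.

Lemma PPhi_at_notin (rest : PPhi F) x : x \notin unzip1 rest -> PPhi_at rest x = [::].
Proof.
elim: rest => [|[y l] rest IH] //=; rewrite inE negb_or => /andP[h1 h2].
by rewrite PPhi_at_cons eq_sym (negbTE h1) IH.
Qed.

Lemma PPhi_at_mem (mu : PPhi F) x :
  PPhi_at mu x = [::] \/ exists2 p, p \in mu & PPhi_at mu x = p.2.
Proof.
elim: mu => [|[y l] rest IH]; first by left.
rewrite PPhi_at_cons; case: (y == x).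
  by right; exists (y, l); rewrite ?inE ?eqxx.
case: IH => [->|[p hp ->]]; first by left.
by right; exists p; rewrite // inE hp orbT.
Qed.

Definition Lbl (mu : PPhi F) : seq (block F) :=
  flatten [seq [seq Jm p.1 m | m <- p.2] | p <- mu & p.1 != tm].
Definition BS (mu : PPhi F) : seq (block F) :=
  Lbl mu ++ [seq Jm tm m | m <- map S (PPhi_e mu)].

Lemma Jblocks_up t (mu : PPhi F) : Jblocks (PPhi_up t mu) =
  BS mu ++ nseq (t - size (PPhi_e mu) - PPhi_norm mu) (Jm tm 1).
Proof.
rewrite /Jblocks /PPhi_up /= eqxx /= filter_id /BS /Lbl -catA; congr (_ ++ _).
by rewrite /PPhi_e PPhi_at_cons eqxx map_cat map_nseq.
Qed.

Lemma sizeL (mu : PPhi F) : sumn (map fst (Lbl mu)) =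
  (\sum_(p <- mu | p.1 != tm) (size p.1).-1 * sumn p.2)%N.
Proof.
rewrite /Lbl; elim: mu => [|[y l] rest IH]; first by rewrite big_nil.
rewrite big_cons /=; case: (y != tm) => //=.
rewrite map_cat sumn_cat IH; congr (_ + _)%N.
elim: l => [|x l IHl]; first by rewrite /= muln0.
by rewrite /= IHl mulnDr.
Qed.

Lemma size_tmpart (e : seq nat) :
  sumn (map fst [seq Jm tm m | m <- map S e]) = (sumn e + size e)%N.
Proof.
elim: e => [|x e IH] //=; rewrite IH /Jm /= size_tm1 /=; lia.
Qed.

Lemma norm_split (mu : PPhi F) : uniq (unzip1 mu) ->
  PPhi_norm mu =
  ((\sum_(p <- mu | p.1 != tm) (size p.1).-1 * sumn p.2) + sumn (PPhi_e mu))%N.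
Proof.
rewrite /PPhi_norm /PPhi_e.
elim: mu => [|[y l] rest IH] /=; first by rewrite !big_nil.
move=> /andP[hy hu]; rewrite !big_cons /= PPhi_at_cons.
case: (eqVneq y tm) => [e|ne] /=.
  rewrite e size_tm1 mul1n addnC; congr (_ + _)%N.
  rewrite [LHS]big_seq_cond [RHS]big_seq_cond; apply: eq_bigl => p /=.
  case hp: (p \in rest) => //=; symmetry; apply/eqP => h.
  by move: hy; rewrite e -h (map_f _ hp).
by rewrite IH // addnA.
Qed.


Lemma allgood_map (T : eqType) (g : T -> block F) s :
  (forall x, x \in s -> goodb (g x)) -> allgood (map g s).
Proof.
elim: s => [|x s IH] //= h; split; first by apply: h; rewrite inE eqxx.
by apply: IH => y hy; apply: h; rewrite inE hy orbT.
Qed.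

Lemma allgood_flatten (T : eqType) (g : T -> seq (block F)) s :
  (forall x, x \in s -> allgood (g x)) -> allgood (flatten (map g s)).
Proof.
elim: s => [|x s IH] //= h; apply/allgood_cat; split; first by apply: h; rewrite inE eqxx.
by apply: IH => y hy; apply: h; rewrite inE hy orbT.
Qed.

Lemma allgood_BS (mu : PPhi F) : PPhi_valid mu -> allgood (BS mu).
Proof.
move=> [hu hv]; apply/allgood_cat; split.
  apply: allgood_flatten => p; rewrite mem_filter => /andP[hp pin].
  by apply: allgood_map => m _; apply: good_other => //; case: (hv p pin).
apply: allgood_map => x /mapP [m hm ->]; apply: good_tm1.
move: hm; rewrite /PPhi_e; case: (PPhi_at_mem mu tm) => [->|[p hp ->]] //.
case: (hv p hp) => _ /andP[_ /allP hpos] hm.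
exact: hpos m hm.
Qed.

Lemma bdiag_out (bs : seq (block F)) i j :
  ((sumn (map fst bs) <= i) || (sumn (map fst bs) <= j))%N -> bdiag bs i j = 0.
Proof.
elim: bs i j => [|[s B] bs IH] i j //= h.
case: ifP => h1; first lia.
case: ifP => h2 //; apply: IH; lia.
Qed.

Lemma bdiag_cat (bs1 bs2 : seq (block F)) i j :
  bdiag (bs1 ++ bs2) i j =
  let S := sumn (map fst bs1) in
  if ((i < S) && (j < S))%N then bdiag bs1 i j
  else if ((S <= i) && (S <= j))%N then bdiag bs2 (i - S) (j - S) else 0.
Proof.
elim: bs1 i j => [|[s B] bs1 IH] i j /=; first by rewrite !subn0.
rewrite IH /= !subnDA.
do ![case: ifP => ? //=]; try lia.
all: rewrite bdiag_out //; lia.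
Qed.


Lemma sizeBS (mu : PPhi F) : uniq (unzip1 mu) ->
  sumn (map fst (BS mu)) = (PPhi_norm mu + size (PPhi_e mu))%N.
Proof.
move=> hu; rewrite /BS map_cat sumn_cat sizeL size_tmpart norm_split //; lia.
Qed.

Lemma bdiag_ones t i j :
  bdiag (nseq t (Jm tm 1)) i j = if ((i == j) && (i < t))%N then 1 else 0.
Proof.
move: (@tm1_entry F 1) (@tm1_size F 1); case: (Jm tm 1) => s B /= hB ->.
elim: t i j => [|t IH] i j /=; first by rewrite andbF.
rewrite IH hB.
do ![case: ifP => ? //=]; lia.
Qed.

Lemma Jmat_E m (lam : PPhi F) (i j : 'I_m) : Jmat m lam i j = bdiag (Jblocks lam) i j.
Proof. by rewrite mxE. Qed.

Lemma Jk_blocks (mu : PPhi F) :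
  Jblocks (PPhi_up (PPhi_norm mu + size (PPhi_e mu)) mu) = BS mu.
Proof.
by rewrite Jblocks_up (_ : (_ - _ - _ = 0)%N) ?cats0 //; lia.
Qed.

Lemma Jn_block (mu : PPhi F) n (hmu : PPhi_valid mu)
  (hk : (PPhi_norm mu + size (PPhi_e mu) <= n)%N) :
  castmx (esym (subnKC hk), esym (subnKC hk)) (Jmat n (PPhi_up n mu)) =
  block_mx (Jmat (PPhi_norm mu + size (PPhi_e mu)) (PPhi_up (PPhi_norm mu + size (PPhi_e mu)) mu)) 0 0 1%:M.
Proof.
apply/matrixP => i j; rewrite castmxE Jmat_E /= Jblocks_up bdiag_cat /=.
rewrite sizeBS; last by case: hmu.
rewrite -(splitK i) -(splitK j).
case: (split i) => i'; case: (split j) => j'.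
- rewrite block_mxEul Jmat_E Jk_blocks /= !ltn_ord //.
- have := ltn_ord i'; have := ltn_ord j'.
  rewrite block_mxEur mxE /=; do ![case: ifP => ? //=]; lia.
- have := ltn_ord i'; have := ltn_ord j'.
  rewrite block_mxEdl mxE /=; do ![case: ifP => ? //=]; lia.
- have := ltn_ord i'; have := ltn_ord j'.
  rewrite block_mxEdr mxE /= !addKn.
  case: (eqVneq i' j') => [->|ne]; rewrite bdiag_ones ?eqxx /=.
    by do ![case: ifP => ? //=]; lia.
  rewrite (_ : (nat_of_ord i' == j') = false); last by apply/negbTE; apply: contra ne => /eqP e; apply/eqP; apply: val_inj.
  by do ![case: ifP => ? //=]; lia.
Qed.

End Aux2.

Section Aux3.
Variable F : finFieldType.

Lemma key_mx k (bs : seq (block F)) (J : 'M[F]_k) :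
  sumn (map fst bs) = k -> allgood bs -> (forall i j : 'I_k, J i j = bdiag bs i j) ->
  forall p p' (P : 'M[F]_(k, p)) (Q : 'M[F]_(p', k)),
  J *m P = P -> Q *m J = Q -> Q *m P = 0.
Proof.
move=> hS hg hJ p p' P Q hP hQ; apply/matrixP => a b; rewrite !mxE.
pose w c := oapp (fun i : 'I_k => P i b) 0 (insub c).
pose u c := oapp (fun i : 'I_k => Q a i) 0 (insub c).
have hw (i : 'I_k) : w (val i) = P i b by rewrite /w valK.
have hu (i : 'I_k) : u (val i) = Q a i by rewrite /u valK.
have := bdiag_good (w := w) (u := u) hg; rewrite /= hS => H.
have -> : \sum_(i < k) Q a i * P i b = \sum_(0 <= c < k) u c * w c.
  by rewrite big_mkord; apply: eq_bigr => i _; rewrite hw hu.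
apply: H.
- move=> i hi; pose io := Ordinal hi.
  rewrite (hw io); have := congr1 (fun M : 'M[F]_(k, p) => M io b) hP; rewrite !mxE => <-.
  rewrite big_mkord; apply: eq_bigr => c _; by rewrite hJ hw.
- move=> j hj; pose jo := Ordinal hj.
  rewrite (hu jo); have := congr1 (fun M : 'M[F]_(p', k) => M a jo) hQ; rewrite !mxE => <-.
  rewrite big_mkord; apply: eq_bigr => c _; by rewrite hJ hu.
Qed.

Lemma castmx_mul_sq m n (e : m = n) (A B : 'M[F]_m) :
  castmx (e, e) (A *m B) = castmx (e, e) A *m castmx (e, e) B.
Proof. by case: n / e. Qed.

Lemma castmx_unit m n (e : m = n) (A : 'M[F]_m) :
  (castmx (e, e) A \in unitmx) = (A \in unitmx).
Proof. by case: n / e. Qed.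

Lemma castmx_inj m n (e : m = n) (A B : 'M[F]_m) :
  castmx (e, e) A = castmx (e, e) B -> A = B.
Proof. by case: n / e. Qed.


Lemma main_blocks k m (Jk : 'M[F]_k)
  (key : forall p p' (P : 'M[F]_(k, p)) (Q : 'M[F]_(p', k)),
      Jk *m P = P -> Q *m Jk = Q -> Q *m P = 0)
  (A : 'M[F]_k) (B : 'M[F]_(k, m)) (C : 'M[F]_(m, k)) (D : 'M[F]_m) :
  let Y := block_mx A B C D in
  let J' := block_mx Jk 0 0 (1%:M : 'M[F]_m) in
  (Y \in unitmx) && (Y *m J' == J' *m Y) <->
  [/\ (A \in unitmx) && (A *m Jk == Jk *m A), D \in unitmx,
      Jk *m B = B & C *m Jk = C].
Proof.
move=> Y J'.
have hYJ : (Y *m J' == J' *m Y) =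
   (block_mx (A *m Jk) B (C *m Jk) D == block_mx (Jk *m A) (Jk *m B) C D).
  by rewrite /Y /J' !mulmx_block !mulmx0 !mul0mx !mulmx1 !mul1mx !addr0 !add0r.
rewrite hYJ; split.
- move=> /andP[hu /eqP he]; case/eq_block_mx: he => h1 h2 h3 _.
  have hYJ' : Y *m J' = J' *m Y by apply/eqP; rewrite hYJ; apply/eqP; rewrite h1 -h2 h3.
  set Z := invmx Y.
  have hZ : Z *m J' = J' *m Z.
    rewrite -[Z *m J']mulmx1 -(mulmxV hu) -/Z !mulmxA -(mulmxA Z J' Y) -hYJ'.
    by rewrite (mulmxA Z Y J') (mulVmx hu) mul1mx.
  have hYZ : Y *m Z = 1%:M by rewrite mulmxV.
  move: hZ hYZ; rewrite -[Z]submxK /J' /Y !mulmx_block !mulmx0 !mul0mx !mulmx1 !mul1mx !addr0 !add0r.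
  rewrite (scalar_mx_block k m 1).
  case/eq_block_mx => _ hB' hC' _.
  case/eq_block_mx => hul _ _ hdr.
  set A' := ulsubmx Z in hul *; set B' := ursubmx Z in hB' hdr *.
  set C' := dlsubmx Z in hC' hul *; set D' := drsubmx Z in hdr *.
  have e1 : C' *m B = 0 by apply: key; rewrite -?h2 ?hC'.
  have e2 : C *m B' = 0 by apply: key; rewrite -?hB' ?h3.
  rewrite h1 eqxx -h2 h3 andbT; split => //.
  + apply: (proj1 (mulmx1_unit (B := A' *m (1%:M + B *m C')) _)).
    rewrite mulmxA.
    have -> : A *m A' = 1%:M - B *m C' by rewrite -hul addrK.
    by rewrite mulmxDr mulmx1 mulmxBl mul1mx -!mulmxA (mulmxA C') e1 mul0mx mulmx0 subr0 subrK.
  + by apply: (proj1 (mulmx1_unit (B := D') _)); rewrite -hdr e2 add0r.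
- case=> /andP[hA /eqP hAJ] hD hB hC.
  apply/andP; split; last by rewrite hAJ hB hC.
  have hAi : invmx A *m Jk = Jk *m invmx A.
    rewrite -[invmx A *m Jk]mulmx1 -(mulmxV hA) !mulmxA -(mulmxA (invmx A) Jk A) -hAJ.
    by rewrite (mulmxA (invmx A) A Jk) (mulVmx hA) mul1mx.
  have hP : Jk *m (invmx A *m B) = invmx A *m B by rewrite mulmxA -hAi -mulmxA hB.
  have h0 := key _ _ _ _ hP hC.
  have -> : Y = block_mx A 0 C D *m block_mx 1%:M (invmx A *m B) 0 1%:M.
    by rewrite mulmx_block !mulmx0 !mul0mx !mulmx1 ?addr0 ?add0r mulmxA (mulmxV hA) mul1mx h0 ?add0r.
  rewrite unitmx_mul !unitmxE det_lblock det_ublock !det1 mulr1 unitrM -!unitmxE hA hD.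
  by rewrite unitr1.
Qed.

End Aux3.

Unset Implicit Arguments. Set Strict Implicit. Set Printing Implicit Defensive.

Theorem proposition2p5 (F : finFieldType) (n : nat) (mu : PPhi F)
  (hmu : PPhi_valid mu)
  (hk : (PPhi_norm mu + size (PPhi_e mu) <= n)%N) :
  let k := (PPhi_norm mu + size (PPhi_e mu))%N in
  let Jn := Jmat n (PPhi_up n mu) in
  let Jk := Jmat k (PPhi_up k mu) in
  forall X : 'M[F]_n,
    let Y : 'M[F]_(k + (n - k)) := castmx (esym (subnKC hk), esym (subnKC hk)) X in
    X \in centralizerGL Jn <->
      [/\ ulsubmx Y \in centralizerGL Jk,
          drsubmx Y \in unitmx,
          Jk *m ursubmx Y = ursubmx Y &
          dlsubmx Y *m Jk = dlsubmx Y].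
Proof.
move=> k Jn Jk X Y.
have hJ : castmx (esym (subnKC hk), esym (subnKC hk)) Jn = block_mx Jk 0 0 1%:M
  := Jn_block hmu hk.
have key : forall p p' (P : 'M[F]_(k, p)) (Q : 'M[F]_(p', k)),
    Jk *m P = P -> Q *m Jk = Q -> Q *m P = 0.
  apply: (@key_mx F k (BS mu)).
  - by apply: sizeBS; case: hmu.
  - exact: allgood_BS.
  - by move=> i j; rewrite Jmat_E Jk_blocks.
have := main_blocks key (ulsubmx Y) (ursubmx Y) (dlsubmx Y) (drsubmx Y).
rewrite submxK /= -hJ -castmx_mul_sq -castmx_mul_sq castmx_unit => <-.
rewrite !inE /=.
suff -> : (castmx (esym (subnKC hk), esym (subnKC hk)) (X *m Jn) ==
          castmx (esym (subnKC hk), esym (subnKC hk)) (Jn *m X)) = (X *m Jn == Jn *m X) by [].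
by apply/eqP/eqP => [/castmx_inj|->].
Qed.
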